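(* Let $P$ be a poset, let $\iota:\mathbf{JF}^+_P\to\mathbf{JF}_P$ be the inclusion, and let $M:\mathbf{JF}_P\to\mathbf{JF}^+_P$ be defined by $M(\mathcal{U})=\mathcal{U}^+$. Then $M$ is left adjoint to $\iota$.
   Context: A join-specification for $P$ is a set $\mathcal{U}\subseteq\wp(P)$ such that $\bigvee S$ exists in $P$ for every $S\in\mathcal{U}$ and $\{p\}\in\mathcal{U}$ for every $p\in P$. A $\mathcal{U}$-ideal is a down-closed $C$ with $\bigvee S\in C$ whenever $S\in\mathcal{U}$, $S\subseteq C$; $\mathcal{I}_{\mathcal{U}}$ is the complete lattice of $\mathcal{U}$-ideals; $\Gamma_{\mathcal{U}}(S)$ is the smallest $\mathcal{U}$-ideal containing $S$; $\mathcal{U}^+=\{S:\bigvee S\text{ exists and }\bigvee S\in\Gamma_{\mathcal{U}}(S)\}$; $\mathcal{U}$ is maximal if $\mathcal{U}=\mathcal{U}^+$ and frame-generating if $\mathcal{I}_{\mathcal{U}}$ is a frame. $\mathbf{JF}_P$ (resp. $\mathbf{JF}^+_P$) is the poset, viewed as a thin category, of frame-generating (resp. maximal frame-generating) join-specifications for $P$ ordered by inclusion. *)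

(* Defs.v *)
(* a poset is a type with a partial order relation given as
   explicit hypotheses; subsets are predicates [P -> Prop]. *)
Set Implicit Arguments.

Definition incl {T : Type} (A B : T -> Prop) : Prop := forall x, A x -> B x.

Section JoinSpec.
Variables (P : Type) (le : P -> P -> Prop).

Definition is_ub (S : P -> Prop) (x : P) : Prop := forall s, S s -> le s x.

Definition is_join (S : P -> Prop) (x : P) : Prop :=
  is_ub S x /\ forall y, is_ub S y -> le x y.

Definition join_exists (S : P -> Prop) : Prop := exists x, is_join S x.

Definition join_spec (U : (P -> Prop) -> Prop) : Prop :=
  (forall S, U S -> join_exists S) /\ (forall p, U (fun q => q = p)).

Definition U_ideal (U : (P -> Prop) -> Prop) (C : P -> Prop) : Prop :=
  (forall x y, le x y -> C y -> C x) /\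
  (forall S x, U S -> incl S C -> is_join S x -> C x).

Definition Gamma (U : (P -> Prop) -> Prop) (S : P -> Prop) : P -> Prop :=
  fun p => forall C, U_ideal U C -> incl S C -> C p.

Definition Uplus (U : (P -> Prop) -> Prop) : (P -> Prop) -> Prop :=
  fun S => exists x, is_join S x /\ Gamma U S x.

End JoinSpec.

Section SetLattice.
Variable P : Type.
Variable X : (P -> Prop) -> Prop.

Definition lub_in (F : (P -> Prop) -> Prop) (A : P -> Prop) : Prop :=
  X A /\ (forall B, F B -> incl B A) /\
  (forall C, X C -> (forall B, F B -> incl B C) -> incl A C).

Definition glb_in (F : (P -> Prop) -> Prop) (A : P -> Prop) : Prop :=
  X A /\ (forall B, F B -> incl A B) /\
  (forall C, X C -> (forall B, F B -> incl C B) -> incl C A).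

Definition pair2 (a b : P -> Prop) : (P -> Prop) -> Prop :=
  fun c => c = a \/ c = b.

(* (X, ⊆) is a frame: a complete lattice satisfying the infinite
   distributive law  a ∧ ⋁B = ⋁ { a ∧ b | b ∈ B }. *)
Definition is_frame : Prop :=
  (forall F, incl F X -> exists A, lub_in F A) /\
  (forall F, incl F X -> exists A, glb_in F A) /\
  (forall a F j m, X a -> incl F X -> lub_in F j -> glb_in (pair2 a j) m ->
     lub_in (fun c => exists b, F b /\ glb_in (pair2 a b) c) m).

End SetLattice.

Definition frame_generating {P : Type} (le : P -> P -> Prop)
  (U : (P -> Prop) -> Prop) : Prop :=
  join_spec le U /\ is_frame (U_ideal le U).

Definition maximal {P : Type} (le : P -> P -> Prop)
  (U : (P -> Prop) -> Prop) : Prop :=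
  forall S, U S <-> Uplus le U S.

Definition JF {P : Type} (le : P -> P -> Prop) (U : (P -> Prop) -> Prop) : Prop :=
  frame_generating le U.
Definition JFplus {P : Type} (le : P -> P -> Prop) (U : (P -> Prop) -> Prop) : Prop :=
  frame_generating le U /\ maximal le U.

(* Main.v *)
Require Import Defs.
From Stdlib Require Import FunctionalExtensionality PropExtensionality.

Section S.
Variables (P : Type) (le : P -> P -> Prop).
Hypothesis le_anti : forall x y, le x y -> le y x -> x = y.

Lemma join_uniq S x y : is_join le S x -> is_join le S y -> x = y.
Proof. intros [H1 H2] [H3 H4]. apply le_anti; auto. Qed.

Lemma U_sub_Uplus U : join_spec le U -> incl U (Uplus le U).
Proof.
  intros [HJ _] S HS. destruct (HJ S HS) as [x Hx]. exists x. split; auto.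
  intros C [_ HC] HSC. eapply HC; eauto.
Qed.

Lemma ideal_eq U : join_spec le U -> U_ideal le (Uplus le U) = U_ideal le U.
Proof.
  intro HU. apply functional_extensionality; intro C.
  apply propositional_extensionality. split.
  - intros [Hd Hj]. split; auto. intros S x HS HSC Hx.
    apply (Hj S x); auto. apply U_sub_Uplus; auto.
  - intros [Hd Hj]. split; auto. intros S x [y [Hy HG]] HSC Hx.
    rewrite (@join_uniq S x y Hx Hy). apply HG; auto. split; auto.
Qed.

Lemma Uplus_mono U V : incl U V -> incl (Uplus le U) (Uplus le V).
Proof.
  intros H S [x [Hx HG]]. exists x. split; auto.
  intros C [Hd Hj] HSC. apply HG; auto. split; auto.
  intros S' y HS' ; apply Hj; auto.
Qed.

Lemma Uplus_idem U : join_spec le U -> Uplus le (Uplus le U) = Uplus le U.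
Proof.
  intro HU. unfold Uplus at 1. unfold Gamma at 1. rewrite (ideal_eq _ HU).
  reflexivity.
Qed.

Lemma Uplus_js U : join_spec le U -> join_spec le (Uplus le U).
Proof.
  intro HU. split.
  - intros S [x [Hx _]]. exists x; auto.
  - intro p. apply U_sub_Uplus; auto. apply HU.
Qed.
End S.

Theorem corollary5p6 (P : Type) (le : P -> P -> Prop)
  (le_refl : forall x, le x x)
  (le_anti : forall x y, le x y -> le y x -> x = y)
  (le_trans : forall x y z, le x y -> le y z -> le x z) :
  (forall U, JF le U -> JFplus le (Uplus le U)) /\
  (forall U V, JF le U -> JF le V -> incl U V ->
     incl (Uplus le U) (Uplus le V)) /\
  (forall U V, JF le U -> JFplus le V ->
     (incl (Uplus le U) V <-> incl U V)).
Proof.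
  split; [|split].
  - intros U [HU HF]. split.
    + split. apply Uplus_js; auto. rewrite (ideal_eq _ _ le_anti _ HU). exact HF.
    + intro S. rewrite (Uplus_idem _ _ le_anti _ HU). tauto.
  - intros U V _ _ H. apply Uplus_mono; auto.
  - intros U V [HU _] [[HV _] HM]. split.
    + intros H S HS. apply H, U_sub_Uplus; auto.
    + intros H S HS. apply HM. eapply Uplus_mono; eauto.
Qed.
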